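(* Let $\mathcal{F}$ be a family of subsets of a finite set $E$ and $K\in\mathcal{F}$. Then $\mathcal{L}(M(\mathcal{F}-\{K\}))\subseteq\mathcal{L}(M(\mathcal{F}))$, i.e. every closed set of the transversal matroid $M(\mathcal{F}-\{K\})$ is a closed set of the transversal matroid $M(\mathcal{F})$.
   Context: For a family $\mathcal{F}$ of subsets of $E$, the transversal matroid $M(\mathcal{F})$ is the matroid on $E$ whose independent sets are the partial transversals of $\mathcal{F}$: sets $\{e_1,\dots,e_k\}$ of distinct elements with $e_j\in F_j$ for pairwise distinct members $F_1,\dots,F_k$ of $\mathcal{F}$. For a matroid $M$ with rank $r_M$, $cl_M(X)=\{a:r_M(X\cup\{a\})=r_M(X)\}$, and $\mathcal{L}(M)$ is the set of closed sets ($cl_M(X)=X$). $\mathcal{F}-\{K\}$ is the family obtained by removing the member $K$. *)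

(* Defs.v *)
From mathcomp Require Import all_boot.
Set Implicit Arguments. Unset Strict Implicit. Unset Printing Implicit Defensive.

(* A family of subsets of the finite ground set E is an indexed family
   F : I -> {set E} over a finite index type I (repetitions allowed).
   A subfamily is given by a set J : {set I} of indices kept;
   F - {K} corresponds to J = [set: I] :\ K. *)

Definition ptrans (E I : finType) (F : I -> {set E}) (J : {set I}) (X : {set E}) : bool :=
  [exists f : {ffun E -> I},
     [forall x in X, (f x \in J) && (x \in F (f x))] &&
     [forall x in X, forall y in X, (f x == f y) ==> (x == y)]].

Definition trank (E I : finType) (F : I -> {set E}) (J : {set I}) (X : {set E}) : nat :=
  \max_(Y : {set E} | (Y \subset X) && ptrans F J Y) #|Y|.

Definition tcl (E I : finType) (F : I -> {set E}) (J : {set I}) (X : {set E}) : {set E} :=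
  [set a | trank F J (a |: X) == trank F J X].

Definition tclosed (E I : finType) (F : I -> {set E}) (J : {set I}) (X : {set E}) : bool :=
  tcl F J X == X.

(* Main.v *)
Require Import Defs.
From mathcomp Require Import all_boot.
Set Implicit Arguments. Unset Strict Implicit. Unset Printing Implicit Defensive.
Lemma trank_wit (E I : finType) (F : I -> {set E}) (J : {set I}) (X : {set E}) : 0 < trank F J X ->
   exists Y : {set E}, [/\ Y \subset X, ptrans F J Y & #|Y| = trank F J X].
Proof.
rewrite /trank => H.
have := eq_bigmax_cond (fun Y : {set E} => #|Y|) (A := [pred Y : {set E} | (Y \subset X) && ptrans F J Y]).
case: (posnP #|[pred Y : {set E} | (Y \subset X) && ptrans F J Y]|) => [H0|Hp].
  move: H; rewrite big_pred0 // => Y; move/card0_eq: H0 => /(_ Y).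
  by rewrite inE.
case/(_ isT)=> Y0 HY0 HE; move: HY0; rewrite inE => /andP[a b]; exists Y0; split=> //.
Qed.
Lemma core (E I : finType) (F : I -> {set E}) (n : nat) :
 forall (Y Z : {set E}) (f1 f2 : E -> I) (K : I) (y0 : E),
  #|Y| <= n ->
  (forall x, x \in Y -> x \in F (f1 x)) -> {in Y &, injective f1} ->
  (forall x, x \in Z -> x \in F (f2 x)) -> {in Z &, injective f2} ->
  (forall z, z \in Z -> f2 z != K) -> y0 \in Y -> f1 y0 = K ->
  (exists e, [/\ e \in Y, e \notin Z & exists g : E -> I,
     [/\ forall x, x \in e |: Z -> x \in F (g x), {in e |: Z &, injective g}
       & forall x, x \in e |: Z -> g x = K \/ exists2 z, z \in Z & g x = f2 z]])
  \/ (exists g : E -> I, [/\ forall x, x \in Y -> x \in F (g x), {in Y &, injective g}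
       & forall x, x \in Y -> g x != K /\
          ((exists2 y, y \in Y & g x = f1 y) \/ (exists2 z, z \in Z & g x = f2 z))]).
Proof.
elim: n => [|n IH] Y Z f1 f2 K y0 hn hF1 hI1 hF2 hI2 hK y0Y f1y0.
  by move: hn; rewrite leqn0 => /eqP/card0_eq/(_ y0); rewrite y0Y.
have f1K : forall x, x \in Y -> x != y0 -> f1 x != K.
  move=> x xY; apply: contra => /eqP e; apply/eqP; apply: hI1 => //; by rewrite e f1y0.
case: (boolP (y0 \in Z)) => y0Z; last first.
  left; exists y0; split=> //; exists (fun x => if x == y0 then K else f2 x); split.
  - move=> x; rewrite in_setU1; case: eqP => [-> _|_ /= xZ]; first by rewrite -f1y0 hF1.
    exact: hF2.
  - move=> x y; rewrite !in_setU1.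
    case: (eqVneq x y0) => [->|xn] /=; case: (eqVneq y y0) => [->|yn] //= xZ yZ.
    + by move=> e; move: (hK y yZ); rewrite -e eqxx.
    + by move=> e; move: (hK x xZ); rewrite e eqxx.
    + exact: hI2.
  - move=> x; rewrite in_setU1; case: eqP => [_ _|_ /= xZ]; first by left.
    by right; exists x.
case: (boolP [exists y in Y, f1 y == f2 y0]) => [/exists_inP [y1 y1Y /eqP f1y1] | none].
  have y1n : y1 != y0.
    by apply/eqP=> e; move: (hK y0 y0Z); rewrite -f1y1 e f1y0 eqxx.
  have hn' : #|Y :\ y0| <= n.
    by rewrite -ltnS (leq_trans _ hn) // (cardsD1 y0 Y) y0Y.
  have := IH (Y :\ y0) (Z :\ y0) f1 f2 (f2 y0) y1 hn'.
  case.
  - by move=> x /setD1P[_ xY]; apply: hF1.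
  - by move=> x y /setD1P[_ xY] /setD1P[_ yY]; apply: hI1.
  - by move=> x /setD1P[_ xY]; apply: hF2.
  - by move=> x y /setD1P[_ xY] /setD1P[_ yY]; apply: hI2.
  - move=> z /setD1P[zn zZ]; apply: contra zn => /eqP e; apply/eqP; exact: hI2.
  - by rewrite in_setD1 y1n.
  - exact: f1y1.
  - case=> e [/setD1P[en eY] eZ' [g [gF gI gV]]].
    have eZ : e \notin Z by move: eZ'; rewrite in_setD1 en.
    have gK : forall x, x \in e |: (Z :\ y0) -> g x != K.
      move=> x xs; case: (gV x xs) => [->|[z /setD1P[_ zZ] ->]]; exact: hK.
    have mem : forall x, x \in e |: Z -> x != y0 -> x \in e |: (Z :\ y0).
      by move=> x; rewrite !in_setU1 in_setD1 => /orP[->|->] // ->; rewrite orbT.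
    left; exists e; split=> //; exists (fun x => if x == y0 then K else g x); split.
    + move=> x xs; case: eqP => [->|/eqP xn]; first by rewrite -f1y0 hF1.
      exact/gF/mem.
    + move=> x y xs ys; case: (eqVneq x y0) => [->|xn]; case: (eqVneq y y0) => [->|yn] //.
      * by move=> ee; move: (gK y (mem y ys yn)); rewrite -ee eqxx.
      * by move=> ee; move: (gK x (mem x xs xn)); rewrite ee eqxx.
      * exact: gI (mem x xs xn) (mem y ys yn).
    + move=> x xs; case: eqP => [_|/eqP xn]; first by left.
      case: (gV x (mem x xs xn)) => [->|[z /setD1P[_ zZ] ->]]; right.
      * by exists y0.
      * by exists z.
  - case=> g [gF gI gV].
    right; exists (fun x => if x == y0 then f2 y0 else g x); split.
    + move=> x xY; case: eqP => [->|/eqP xn]; first exact: hF2.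
      by apply: gF; rewrite in_setD1 xn.
    + move=> x y xY yY; case: (eqVneq x y0) => [->|xn]; case: (eqVneq y y0) => [->|yn] //.
      * move=> ee; have : y \in Y :\ y0 by rewrite in_setD1 yn.
        by move/gV => [+ _]; rewrite -ee eqxx.
      * move=> ee; have : x \in Y :\ y0 by rewrite in_setD1 xn.
        by move/gV => [+ _]; rewrite ee eqxx.
      * by apply: gI; rewrite in_setD1 ?xn ?yn.
    + move=> x xY; case: (eqVneq x y0) => [_|xn].
        by split; [exact: (hK _ y0Z) | right; exists y0].
      have xs : x \in Y :\ y0 by rewrite in_setD1 xn.
      case: (gV x xs) => _ [[y /setD1P[yn yY] ->]|[z /setD1P[_ zZ] ->]].
      * by split; [exact: (f1K _ yY yn) | left; exists y].
      * by split; [exact: (hK _ zZ) | right; exists z].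
right; exists (fun x => if x == y0 then f2 y0 else f1 x); split.
- move=> x xY; case: eqP => [->|_]; [exact: hF2 | exact: hF1].
- move=> x y xY yY; case: (eqVneq x y0) => [->|xn]; case: (eqVneq y y0) => [->|yn] //.
  + move=> ee; case/negP: none; apply/exists_inP; exists y => //; by rewrite -ee.
  + move=> ee; case/negP: none; apply/exists_inP; exists x => //; by rewrite ee.
  + exact: hI1.
- move=> x xY; case: (eqVneq x y0) => [_|xn].
    by split; [exact: (hK _ y0Z) | right; exists y0].
  by split; [exact: (f1K _ xY xn) | left; exists x].
Qed.

Section S.
Variables (E I : finType) (F : I -> {set E}).

Lemma ptransP (J : {set I}) (Y : {set E}) :
  ptrans F J Y <-> exists f : E -> I,
    (forall x, x \in Y -> f x \in J /\ x \in F (f x)) /\ {in Y &, injective f}.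
Proof.
split.
- case/existsP=> f /andP[/forallP H1 /forallP H2]; exists f; split.
  + by move=> x xY; move: (H1 x); rewrite xY /= => /andP.
  + move=> x y xY yY e; move: (H2 x); rewrite xY /= => /forallP/(_ y).
    by rewrite yY e eqxx /= => /eqP.
- case=> f [H1 H2]; apply/existsP; exists (finfun f); apply/andP; split.
  + apply/forallP=> x; apply/implyP=> xY; rewrite ffunE.
    by case: (H1 x xY)=> -> ->.
  + apply/forallP=> x; apply/implyP=> xY; apply/forallP=> y; apply/implyP=> yY.
    by rewrite !ffunE; apply/implyP=> /eqP e; rewrite (H2 x y xY yY e).
Qed.

Lemma trank_ge (J : {set I}) (X Y : {set E}) : Y \subset X -> ptrans F J Y -> #|Y| <= trank F J X.
Proof. by move=> sYX pY; rewrite /trank; apply: (leq_bigmax_cond Y); rewrite sYX. Qed.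

Lemma ptrans_sub (J J' : {set I}) (Y Y' : {set E}) : J \subset J' -> Y' \subset Y -> ptrans F J Y -> ptrans F J' Y'.
Proof.
move=> sJ sY /ptransP [f [H1 H2]]; apply/ptransP; exists f; split.
  move=> x /(subsetP sY) xY; case: (H1 x xY) => a b; split=> //; exact: (subsetP sJ).
by move=> x y /(subsetP sY) xY /(subsetP sY) yY; apply: H2.
Qed.

Lemma trank_mono (J J' : {set I}) (X X' : {set E}) : J \subset J' -> X \subset X' -> trank F J X <= trank F J' X'.
Proof.
move=> sJ sX; apply/bigmax_leqP => Y /andP[sYX pY].
apply: trank_ge; [exact: subset_trans sX | exact: ptrans_sub pY].
Qed.

Lemma trank_add1 (J : {set I}) (X : {set E}) a : trank F J (a |: X) <= (trank F J X).+1.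
Proof.
apply/bigmax_leqP => Y /andP[sYX pY].
rewrite (cardsD1 a Y) -addn1 addnC leq_add ?leq_b1 //.
apply: trank_ge; last by apply: ptrans_sub pY; rewrite ?subsetDl.
apply/subsetP=> y /setD1P[yn yY]; move: (subsetP sYX y yY); rewrite in_setU1.
by rewrite (negPf yn).
Qed.

End S.

Theorem theorem15 (E I : finType) (F : I -> {set E}) (K : I) (X : {set E}) :
  tclosed F ([set: I] :\ K) X -> tclosed F [set: I] X.
Proof.
rewrite /tclosed /tcl => /eqP H; apply/eqP/setP => a; rewrite inE.
case aX: (a \in X).
  have -> : a |: X = X by apply/setP => y; rewrite in_setU1; case: eqP => // ->.
  by rewrite eqxx.
set J := [set: I] :\ K.
have Ha : trank F J (a |: X) != trank F J X by move/setP: H => /(_ a); rewrite inE aX => ->.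
set k := trank F J X in Ha *.
have hk1 : trank F J (a |: X) = k.+1.
  apply/eqP; rewrite eqn_leq trank_add1 ltn_neqAle eq_sym Ha /=.
  by apply: trank_mono; rewrite ?subsetU1.
have rge : k <= trank F [set: I] X by apply: trank_mono; rewrite ?subsetT.
have ra : k.+1 <= trank F [set: I] (a |: X).
  by rewrite -hk1; apply: trank_mono; rewrite ?subsetT.
apply/negbTE; set r := trank F [set: I] X in rge *.
case: (ltnP k r) => hr; last first.
  by rewrite neq_ltn (leq_trans _ ra) ?orbT // ltnS.
have [Y [sYX pY cY]] := trank_wit (leq_ltn_trans (leq0n k) hr).
have [Z [sZX pZ cZ]] := trank_wit (F := F) (J := J) (X := a |: X) (ltac:(by rewrite hk1)).
case/ptransP: pY => f1 [H1 I1]; case/ptransP: pZ => f2 [H2 I2].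
have Yle : forall g : E -> I, (forall x, x \in Y -> x \in F (g x)) -> {in Y &, injective g} ->
   (forall x, x \in Y -> g x != K) -> False.
  move=> g gF gI gK.
  have : #|Y| <= k.
    apply: trank_ge => //; apply/ptransP; exists g; split=> // x xY.
    by split; [rewrite in_setD1 (gK x xY) in_setT | apply: gF].
  by move=> h; move: hr; rewrite /r -cY ltnNge h.
case: (boolP [exists y in Y, f1 y == K]) => [/exists_inP [y0 y0Y /eqP f1y0]|none]; last first.
  exfalso; apply: (Yle f1) => //; first by move=> x /H1 [].
  by move=> x xY; apply/eqP=> e; case/negP: none; apply/exists_inP; exists x => //; rewrite e.
have rle : r <= k.+1.
  rewrite /r -cY (cardsD1 y0 Y) y0Y add1n ltnS.
  apply: trank_ge; first by apply: subset_trans sYX; apply: subsetDl.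
  apply/ptransP; exists f1; split.
    move=> x /setD1P[xn xY]; case: (H1 x xY) => _ ->; split=> //.
    rewrite in_setD1 in_setT andbT; apply: contra xn => /eqP e; apply/eqP.
    by apply: I1 => //; rewrite e f1y0.
  by move=> x y /setD1P[_ xY] /setD1P[_ yY]; apply: I1.
have hK : forall z, z \in Z -> f2 z != K.
  by move=> z /H2 [+ _]; rewrite in_setD1 => /andP[].
have := core (n := #|Y|) (Z := Z) (f1 := f1) (f2 := f2) (y0 := y0) (leqnn _)
  (fun x xY => (H1 x xY).2) I1 (fun x xZ => (H2 x xZ).2) I2 hK y0Y f1y0.
case.
  case=> e [eY eZ [g [gF gI _]]].
  have : #|e |: Z| <= trank F [set: I] (a |: X).
    apply: trank_ge.
      apply/subsetP=> x; rewrite in_setU1 => /orP[/eqP ->|xZ].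
        by rewrite in_setU1 (subsetP sYX) ?orbT.
      exact: (subsetP sZX).
    apply/ptransP; exists g; split=> //; move=> x xs; split; [by rewrite in_setT | exact: gF].
  rewrite cardsU1 eZ cZ hk1 add1n => h.
  by rewrite neq_ltn (leq_trans _ h) ?orbT // ltnS.
case=> g [gF gI gV]; exfalso; apply: (Yle g) => // x xY; by case: (gV x xY).
Qed.
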